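(* Let $f\in\mathbb{Z}[x,y]$ be square-free with $n_y:=\deg_y f\ge1$, and assume $\deg_y f(\alpha,y)=n_y$ for all $\alpha\in\mathbb{C}$. Let $p$ be a prime that does not divide the leading coefficient (with respect to $y$) of $f$ and of $f_y$, and let $d_i^{(p)}:=\deg R_i^{(p)}$, with $R_i^{(p)}$ as in the context. Then $$N^-:=\sum_{i\ge1}(n_y-i)\,d_i^{(p)}\le N,$$ where $N:=\sum_{\alpha}n_\alpha$, the sum taken over all complex $x$-critical values $\alpha$ of $f$, is the total number of distinct complex points of the curve $f=0$ lying in $x$-critical fibers.
   Context: An $x$-critical value of $f$ is an $\alpha\in\mathbb{C}$ with $f(\alpha,\beta)=f_y(\alpha,\beta)=0$ for some $\beta\in\mathbb{C}$; equivalently a root of $R=\operatorname{res}(f,f_y;y)$. $n_\alpha$ is the number of distinct complex roots of $f(\alpha,y)$. Let $R^*$ be the square-free part of $R$. For polynomials $a,b$ in $y$ with coefficients in a ring $A[x]$, the $i$-th principal subresultant coefficient $\operatorname{sres}_i(a,b;y)\in A[x]$ is the coefficient of $y^i$ in the $i$-th subresultant $\operatorname{Sres}_i(a,b;y)$ (equivalently the determinant of the submatrix of the Sylvester matrix of $a,b$ w.r.t. $y$ obtained by deleting the last $i$ rows of $a$-coefficients, the last $i$ rows of $b$-coefficients and the last $2i$ columns). Let $f^{(p)}=f\bmod p$, $g^{(p)}=f_y\bmod p\in\mathbb{Z}_p[x,y]$, and $\operatorname{sr}_i^{(p)}:=\operatorname{sres}_i(f^{(p)},g^{(p)};y)\in\mathbb{Z}_p[x]$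 computed over $\mathbb{Z}_p$. Define in $\mathbb{Z}_p[x]$: $S_0^{(p)}:=R^*\bmod p$, $S_i^{(p)}:=\gcd(S_{i-1}^{(p)},\operatorname{sr}_i^{(p)})$ for $i\ge1$, and $R_i^{(p)}:=\gcd(S_0^{(p)},\dots,S_{i-1}^{(p)})/\gcd(S_0^{(p)},\dots,S_i^{(p)})$ for $i\ge1$ (gcds taken up to units; only degrees matter). *)

(* Defs.v *)
From HB Require Import structures.
From mathcomp Require Import all_boot all_order all_algebra.
From mathcomp Require Import separable algC.
Set Implicit Arguments. Unset Strict Implicit. Unset Printing Implicit Defensive.
Import Order.TTheory GRing.Theory Num.Theory.
Local Open Scope ring_scope.

(* Bivariate polynomials f(x,y) are represented as {poly {poly R}}:
   the outer variable is y, the inner variable (coefficients) is x. *)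

Definition icast (R : nzRingType) (z : int) : R := z%:~R.

Definition redx (F : nzRingType) (c : {poly int}) : {poly F} := map_poly (@icast F) c.
Definition redxy (F : nzRingType) (f : {poly {poly int}}) : {poly {poly F}} :=
  map_poly (@redx F) f.

Definition evalx (a : algC) (f : {poly {poly int}}) : {poly algC} :=
  map_poly (fun c : {poly int} => (redx algC c).[a]) f.

Definition xcritical (f : {poly {poly int}}) (a : algC) : Prop :=
  exists b : algC, (evalx a f).[b] = 0 /\ (evalx a f^`()).[b] = 0.

Definition root_list (q : {poly algC}) (r : seq algC) : Prop :=
  uniq r /\ forall b : algC, (b \in r) = root q b.

(* The submatrix of the Sylvester matrix of a, b (w.r.t. y, descending powers)
   obtained by deleting the last i rows of a-coefficients, the last i rows of
   b-coefficients and the last 2i columns; with m = deg a, n = deg b, its first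
   n - i rows are shifts of the coefficients of a, the last m - i rows shifts
   of the coefficients of b. *)
Definition sres_mx (R : nzRingType) (a b : {poly {poly R}}) (i : nat) :
  'M[{poly R}]_((size a).-1 + (size b).-1 - i.*2) :=
  \matrix_(r, c)
    let m := (size a).-1 in let n := (size b).-1 in
    if (r < n - i)%N then
      (if (c <= m + r)%N then a`_(m + r - c) else 0)
    else
      let l := (r - (n - i))%N in
      (if (c <= n + l)%N then b`_(n + l - c) else 0).

Definition sres (R : comNzRingType) (a b : {poly {poly R}}) (i : nat) : {poly R} :=
  \det (sres_mx a b i).

Section Chain.
Variable F : fieldType.
Variables (S0 : {poly F}) (sr : nat -> {poly F}).

Fixpoint Schain (i : nat) : {poly F} :=
  if i is k.+1 then gcdp (Schain k) (sr k.+1) else S0.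

Definition Sgcd (i : nat) : {poly F} :=
  foldr (@gcdp F) 0 [seq Schain k | k <- iota 0 i.+1].

Definition Rchain (i : nat) : {poly F} := Sgcd i.-1 %/ Sgcd i.
End Chain.

(* d_i^{(p)} = deg R_i^{(p)} for f and the square-free part Rs of res(f, f_y; y). *)
Definition dmod (p : nat) (f : {poly {poly int}}) (Rs : {poly int}) (i : nat) : nat :=
  let fp := redxy 'F_p f in
  let gp := redxy 'F_p f^`() in
  (size (Rchain (redx 'F_p Rs) (sres fp gp) i)).-1.

(* Main.v *)
Require Import Defs.
From HB Require Import structures.
From mathcomp Require Import all_boot all_order all_algebra.
From mathcomp Require Import separable algC.
From mathcomp Require Import zify.

Lemma mono_le (z : nat -> nat) : (forall k, z k.+1 <= z k) -> forall m k, k <= m -> z m <= z k.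
Proof.
move=> Hz m; elim: m => [|m IH] k Hk; first by have -> : k = 0 by lia.
case: (leqP k m) => H; first exact: leq_trans (Hz m) (IH k H).
by have -> : k = m.+1 by lia.
Qed.

Lemma tel1 (z : nat -> nat) m : (forall k, z k.+1 <= z k) ->
  \sum_(1 <= i < m.+1) (z i.-1 - z i) = z 0 - z m.
Proof.
move=> Hz; elim: m => [|m IH]; first by rewrite big_geq // subnn.
rewrite big_nat_recr //= IH.
have := @mono_le z Hz m 0 (leq0n m); have := Hz m; lia.
Qed.

Lemma telescope_sum (z : nat -> nat) n : (forall k, z k.+1 <= z k) ->
  \sum_(1 <= i < n) (n - i) * (z i.-1 - z i) = \sum_(1 <= j < n) (z 0 - z j).
Proof.
move=> Hz; elim: n => [|n IH]; first by rewrite !big_geq.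
case: n IH => [|n] IH; first by rewrite !big_geq.
transitivity (\sum_(1 <= i < n.+2) ((n.+1 - i) * (z i.-1 - z i) + (z i.-1 - z i))).
  apply: eq_big_nat => i /andP [H1 H2].
  have -> : n.+2 - i = (n.+1 - i).+1 by lia.
  by rewrite mulSn addnC.
rewrite big_split /= tel1 // big_nat_recr //= subnn mul0n addn0 IH.
by rewrite [in RHS]big_nat_recr.
Qed.

Lemma count_bound n g (P : nat -> bool) : (forall j, P j -> g <= j) ->
  \sum_(1 <= j < n) (P j : nat) <= n - g.
Proof.
move=> HP; elim: n => [|n IH]; first by rewrite big_geq.
case: n IH => [|n] IH; first by rewrite big_geq.
rewrite big_nat_recr //=.
case Hn: (P n.+1); last by rewrite addn0; apply: leq_trans IH _; lia.
have := HP _ Hn; move: IH; lia.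
Qed.

Import Order.TTheory GRing.Theory Num.Theory.
Local Open Scope ring_scope.

Definition dmx {A : nzRingType} (N : nat) (E : nat -> nat -> A) : 'M[A]_N :=
  \matrix_(r < N, c < N) E r c.

Lemma eq_dmx {A : nzRingType} N (E E' : nat -> nat -> A) :
  (forall r c, E r c = E' r c) -> dmx N E = dmx N E'.
Proof. by move=> H; apply/matrixP => r c; rewrite !mxE H. Qed.

Lemma det_dmx_map (A B : comNzRingType) (phi : {rmorphism A -> B}) N E :
  phi (\det (dmx N E)) = \det (dmx N (fun r c => phi (E r c))).
Proof. by rewrite -det_map_mx; congr (\det _); apply/matrixP => r c; rewrite !mxE. Qed.

Definition sE {A : nzRingType} (m n i : nat) (a b : nat -> A) (r c : nat) : A :=
  if (r < n - i)%N then (if (c <= m + r)%N then a (m + r - c)%N else 0)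
  else (if (c <= n + (r - (n - i)))%N then b (n + (r - (n - i)) - c)%N else 0).

Definition gsres {A : comNzRingType} (a b : {poly A}) (i : nat) : A :=
  \det (dmx ((size a).-1 + (size b).-1 - i.*2)
     (sE (size a).-1 (size b).-1 i (nth 0 a) (nth 0 b))).

Lemma sres_gsres (R : comNzRingType) (a b : {poly {poly R}}) i :
  sres a b i = gsres a b i.
Proof. by []. Qed.

Lemma gsres_map (A B : comNzRingType) (phi : {rmorphism A -> B}) (a b : {poly A}) i :
  size (map_poly phi a) = size a -> size (map_poly phi b) = size b ->
  gsres (map_poly phi a) (map_poly phi b) i = phi (gsres a b i).
Proof.
move=> Ha Hb; rewrite /gsres Ha Hb det_dmx_map; congr (\det _); apply: eq_dmx => r c.
by rewrite /sE; case: ifP => _; case: ifP => _; rewrite ?coef_map ?rmorph0.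
Qed.

Definition rE {A : nzRingType} (dq : nat) (p q : {poly A}) (i j : nat) : A :=
  if (i < dq)%N then p`_(j - i) *+ (i <= j)%N
  else q`_(j - (i - dq)) *+ (i - dq <= j)%N.

Lemma resultant_dmx (A : comNzRingType) (p q : {poly A}) :
  resultant p q = \det (dmx ((size q).-1 + (size p).-1) (rE (size q).-1 p q)).
Proof.
rewrite /resultant; congr (\det _); apply/matrixP => i j; rewrite Sylvester_mxE mxE /rE.
case: splitP => k Hk; rewrite Hk /=; first by [].
by rewrite addKn.
Qed.

Lemma resultant_map (A B : comNzRingType) (phi : {rmorphism A -> B}) (a b : {poly A}) :
  size (map_poly phi a) = size a -> size (map_poly phi b) = size b ->
  resultant (map_poly phi a) (map_poly phi b) = phi (resultant a b).
Proof.
move=> Ha Hb; rewrite !resultant_dmx Ha Hb det_dmx_map; congr (\det _); apply: eq_dmx => r c.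
by rewrite /rE; case: ifP => _; rewrite !coef_map rmorphMn.
Qed.


Lemma poly_sumX (K : nzRingType) (u : {poly K}) s :
  (size u <= s)%N -> u = \sum_(0 <= r < s) u`_r *: 'X^r.
Proof.
move=> Hs; rewrite big_mkord -poly_def; apply/polyP => k; rewrite coef_poly.
by case: ifP => // /negbT; rewrite -leqNgt => Hk; apply/leq_sizeP: (leq_trans Hs Hk).
Qed.

Lemma gsres_eq0 (K : fieldType) (a b u v : {poly K}) i :
  (i <= (size b).-1)%N -> (i <= (size a).-1)%N ->
  (size u <= (size b).-1 - i)%N -> (size v <= (size a).-1 - i)%N -> v != 0 ->
  u * a + v * b = 0 -> gsres a b i = 0.
Proof.
move=> Hib Hia Hu Hv v0 Huv.
rewrite /gsres.
set m := (size a).-1 in Hia Hv *; set n := (size b).-1 in Hib Hu *.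
set N := (m + n - i.*2)%N.
set s1 := (n - i)%N in Hu *; set s2 := (m - i)%N in Hv *.
set K0 := (m + n - i - 1)%N.
have HN : N = (s1 + s2)%N by rewrite /N /s1 /s2; lia.
pose L (p : {poly K}) : 'rV[K]_N := \row_(c < N) p`_(K0 - c).
pose P (r : nat) := if (r < s1)%N then 'X^(s1 - 1 - r) * a else 'X^(s2 - 1 - (r - s1)) * b.
pose cf (r : nat) := if (r < s1)%N then u`_(s1 - 1 - r) else v`_(s2 - 1 - (r - s1)).
pose w : 'rV[K]_N := \row_(r < N) cf r.
have rowA : forall r : 'I_N, row r (dmx N (sE m n i (nth 0 a) (nth 0 b))) = L (P r).
  move=> r; apply/rowP => c; rewrite !mxE /sE /P.
  have Hc := ltn_ord c; have Hr := ltn_ord r.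
  case: ifP => Hr1; rewrite coefXnM.
    have -> : (K0 - c < s1 - 1 - r)%N = ~~ (c <= m + r)%N by apply/idP/idP; rewrite /K0; lia.
    case: ifP => Hcm //=; congr (a`_ _); rewrite /K0; lia.
  have -> : (K0 - c < s2 - 1 - (r - s1))%N = ~~ (c <= n + (r - (n - i)))%N.
    by apply/idP/idP; rewrite /K0 /s1 /s2 in Hr1 *; lia.
  case: ifP => Hcm //=; congr (b`_ _); rewrite /K0 /s1 /s2 in Hr1 *; lia.
have sumP : \sum_(r < N) cf r *: P r = u * a + v * b.
  rewrite -(big_mkord xpredT (fun r => cf r *: P r)) HN (big_cat_nat _ (leq_addr _ _)) //=.
  rewrite [in RHS](@poly_sumX _ _ _ Hu) [in RHS](@poly_sumX _ _ _ Hv) !big_distrl /=.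
  congr (_ + _).
    rewrite big_nat_rev /=; apply: eq_big_nat => r /andP [_ Hr].
    rewrite /cf /P add0n; have -> : (s1 - r.+1 < s1)%N by lia.
    have -> : (s1 - 1 - (s1 - r.+1) = r)%N by lia.
    by rewrite -scalerAl.
  rewrite -{1}(add0n s1) big_addn.
  have -> : (s1 + s2 - s1 = s2)%N by lia.
  rewrite big_nat_rev /=; apply: eq_big_nat => r /andP [_ Hr].
  rewrite /cf /P add0n; have -> : (s2 - r.+1 + s1 < s1)%N = false by lia.
  have -> : (s2 - 1 - (s2 - r.+1 + s1 - s1) = r)%N by lia.
  by rewrite -scalerAl.
apply/eqP/det0P; exists w.
  have Hs2 : (0 < s2)%N.
    by move: v0; rewrite -size_poly_eq0; move: Hv; rewrite /s2; lia.
  have Hr : (s1 + (s2 - 1 - (size v).-1) < N)%N by rewrite HN; lia.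
  apply/negP => /eqP/rowP /(_ (Ordinal Hr)); rewrite !mxE /cf.
  have -> : (s1 + (s2 - 1 - (size v).-1) < s1)%N = false by lia.
  have -> : (s2 - 1 - (s1 + (s2 - 1 - (size v).-1) - s1) = (size v).-1)%N.
    by move: v0; rewrite -size_poly_eq0; lia.
  by move/eqP; rewrite -lead_coefE lead_coef_eq0 (negPf v0).
rewrite mulmx_sum_row.
under eq_bigr => r _ do rewrite rowA.
transitivity (L (\sum_(r < N) cf r *: P r)).
  apply/rowP => c; rewrite !mxE summxE coef_sum; apply: eq_bigr => r _.
  by rewrite !mxE coefZ.
by rewrite sumP Huv; apply/rowP => c; rewrite !mxE coef0.
Qed.


Lemma prod_dvd_deriv (K : idomainType) (r : seq K) (P : {poly K}) :
  all (root P) r -> (\prod_(z <- r) ('X - z%:P)) %| P * (\prod_(z <- r) ('X - z%:P))^`().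
Proof.
elim: r => [|z r IH] /=; first by rewrite big_nil dvd1p.
case/andP => Pz Pr; rewrite big_cons derivM derivXsubC mul1r mulrDr.
apply: dvdp_add.
  by apply: dvdp_mul => //; rewrite dvdp_XsubCl.
by rewrite mulrCA; apply: dvdp_mul => //; apply: IH.
Qed.

Lemma size_deriv0 (a : {poly algC}) : size a^`() = (size a).-1.
Proof.
apply/eqP; rewrite eqn_leq; apply/andP; split.
  have [->|a0] := eqVneq a 0; first by rewrite deriv0 size_poly0.
  by move: (lt_size_deriv a0); case: (size a).
case Ha: (size a) => [|[|k]] //=.
have : a^`()`_k != 0.
  rewrite coef_deriv mulrn_eq0 negb_or /=.
  have -> : a`_k.+1 = lead_coef a by rewrite lead_coefE Ha.
  by rewrite lead_coef_eq0 -size_poly_eq0 Ha.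
case: leqP => // Hs; rewrite nth_default //.
by rewrite eqxx.
Qed.

Lemma sres_vanish (a : {poly algC}) (rr : seq algC) i :
  (2 <= size a)%N -> (forall z, (z \in rr) = root a z) ->
  (i + size rr < (size a).-1)%N -> gsres a a^`() i = 0.
Proof.
move=> Ha Hrr Hi.
have a0 : a != 0 by rewrite -size_poly_eq0; lia.
have [r Dr] := closed_field_poly_normal a.
set P := \prod_(z <- rr) ('X - z%:P).
have Hb := size_deriv0 a.
have b0 : a^`() != 0 by rewrite -size_poly_eq0 Hb; lia.
have lc0 : lead_coef a != 0 by rewrite lead_coef_eq0.
have dv : a %| P * a^`().
  rewrite Dr derivZ -scalerAr dvdpZl // dvdpZr //.
  apply: prod_dvd_deriv; apply/allP => z zr.
  rewrite /P root_prod_XsubC Hrr Dr rootZ // root_prod_XsubC //.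
have [Q HQ] := dvdpP _ _ dv.
have sP : size P = (size rr).+1 by rewrite size_prod_XsubC.
have P0 : P != 0 by rewrite -size_poly_eq0 sP.
have Q0 : Q != 0.
  by apply/eqP => Q0; move: HQ; rewrite Q0 mul0r; apply/eqP; rewrite mulf_neq0.
have sQ : size Q = size rr.
  have := congr1 (fun q : {poly algC} => size q) HQ; rewrite /= !size_mul // sP Hb.
have Ha2 : (1 < size a)%N := Ha. move: Ha2; set sa := size a; set sq := size Q; set sr := size rr; rewrite -!subn1 => H1 H2. clearbody sa sq sr. lia.
apply: (@gsres_eq0 _ a a^`() (- Q) P); rewrite ?size_opp ?Hb ?sP ?sQ //.
all: have Hi2 : (i + size rr < (size a).-1)%N := Hi; have Ha2 : (1 < size a)%N := Ha; move: Hi2 Ha2; set sa := size a; rewrite -!subn1; clearbody sa; try lia.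
by move=> _ _; rewrite mulNr HQ addNr.
Qed.


Section ChainF.
Variable F : fieldType.
Variables (S0 : {poly F}) (sr : nat -> {poly F}).
Local Notation S := (Schain S0 sr).

Lemma Schain_dvd k d : S (k + d)%N %| S k.
Proof.
elim: d => [|d IH]; first by rewrite addn0.
by rewrite addnS /=; apply: dvdp_trans IH; apply: dvdp_gcdl.
Qed.

Lemma Schain_neq0 k : S0 != 0 -> S k != 0.
Proof. by move=> H; elim: k => //= k IH; rewrite gcdp_eq0 negb_and IH. Qed.

Lemma foldr_eqp m k : foldr (@gcdp F) 0 [seq S i | i <- iota m k.+1] %= S (m + k)%N.
Proof.
elim: k m => [|k IH] m; first by rewrite /= gcdp0 addn0 eqpxx.
change (gcdp (S m) (foldr (@gcdp F) 0 [seq S i | i <- iota m.+1 k.+1]) %= S (m + k.+1)%N).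
apply: eqp_trans (eqp_gcdr _ (IH m.+1)) _.
rewrite addSnnS; apply: dvdp_gcd_idr; exact: Schain_dvd.
Qed.

Lemma Sgcd_eqp k : Sgcd S0 sr k %= S k.
Proof. exact: foldr_eqp. Qed.

Lemma size_Rchain i : S0 != 0 -> (0 < i)%N ->
  (size (Rchain S0 sr i)).-1 = (size (S i.-1) - size (S i))%N.
Proof.
move=> H0 Hi; rewrite /Rchain size_divp; last first.
  by rewrite -size_poly_eq0 (eqp_size (Sgcd_eqp _)) size_poly_eq0 Schain_neq0.
rewrite !(eqp_size (Sgcd_eqp _)).
have Hs : (0 < size (S i))%N by rewrite size_poly_gt0 Schain_neq0.
have Hd : (size (S i) <= size (S i.-1))%N.
  apply: dvdp_leq; first exact: Schain_neq0.
  by have := Schain_dvd i.-1 1; rewrite addn1 prednK.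
move: Hs Hd; set x := size (S i); set y := size (S i.-1); clearbody x y; rewrite -!subn1; lia.
Qed.

Lemma Schain_dvdP (T : {poly F}) j : T %| S0 ->
  (forall i, (1 <= i <= j)%N -> T %| sr i) -> T %| S j.
Proof.
move=> H0 Hs; elim: j Hs => [|j IH] Hs //=.
rewrite dvdp_gcd IH ?Hs //; first by rewrite leqnn.
by move=> i /andP [Hi1 Hi2]; apply: Hs; rewrite Hi1 (leq_trans Hi2).
Qed.

Lemma size_Schain_le k : S0 != 0 -> (size (S k.+1) <= size (S k))%N.
Proof.
move=> H0; apply: dvdp_leq; first exact: Schain_neq0.
by have := Schain_dvd k 1; rewrite addn1.
Qed.

End ChainF.

Lemma Schain_map_dvd (F E : fieldType) (phi : {rmorphism F -> E})
  (S0 : {poly F}) (sr : nat -> {poly F}) (D W : {poly E}) j :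
  D %| W * map_poly phi S0 ->
  (forall i, (1 <= i <= j)%N -> D %| W * map_poly phi (sr i)) ->
  D %| W * map_poly phi (Schain S0 sr j).
Proof.
move=> H0 Hs; elim: j Hs => [|j IH] Hs //=.
rewrite gcdp_map (eqp_dvdr _ (mulp_gcdr _ _ _)) dvdp_gcd IH ?Hs //; first by rewrite leqnn.
by move=> i /andP [Hi1 Hi2]; apply: Hs; rewrite Hi1 (leq_trans Hi2).
Qed.

Lemma Schain_dvd_sr (F : fieldType) (S0 : {poly F}) (sr : nat -> {poly F}) i j :
  (1 <= i <= j)%N -> Schain S0 sr j %| sr i.
Proof.
case/andP => H1 H2.
have -> : j = (i + (j - i))%N by rewrite subnKC.
apply: (dvdp_trans (Schain_dvd _ S0 sr i (j - i))).
by case: i H1 {H2} => [|i] //= _; apply: dvdp_gcdr.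
Qed.


Lemma size_map_le (A B : nzSemiRingType) (f : A -> B) (p : {poly A}) :
  (size (map_poly f p) <= size p)%N.
Proof. by rewrite /map_poly size_poly. Qed.

Notation pZtoQ := (map_poly (intr : int -> rat)).

Lemma pZtoQ_inj : injective pZtoQ.
Proof. by apply: map_inj_poly => //; apply: intr_inj. Qed.

Lemma int_dvd_of_rat (T s : {poly int}) : zprimitive T = T ->
  pZtoQ T %| pZtoQ s -> exists r, s = T * r.
Proof.
move=> HT /dvdpP [Q0 HQ].
have [q0 [a a0 Hq0]] := rat_poly_scale Q0.
have Hs : a *: s = q0 * T.
  apply: pZtoQ_inj; rewrite map_polyZ rmorphM /= HQ Hq0 -scalerAl scalerA mulfV ?scale1r //.
  by rewrite intr_eq0.
have : T %| s.
  by apply/Pdiv.Idomain.dvdpP; exists (a, q0).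
by case/dvdpP_int => r; rewrite HT => ->; exists r.
Qed.

Lemma rat_to_int (SQ : {poly rat}) : SQ != 0 ->
  exists T : {poly int}, [/\ zprimitive T = T, pZtoQ T %= SQ & size T = size SQ].
Proof.
move=> SQ0; have [q [a a0 Hq]] := rat_poly_scale SQ.
have q0 : q != 0 by apply: contraNneq SQ0 => q0; rewrite Hq q0 rmorph0 scaler0.
have c0 : zcontents q != 0 by rewrite zcontents_eq0.
have HT : pZtoQ (zprimitive q) %= SQ.
  rewrite Hq {2}(zpolyEprim q) map_polyZ /= scalerA eqp_sym eqp_scale //.
  by rewrite mulf_neq0 ?invr_eq0 ?intr_eq0.
exists (zprimitive q); split => //; first exact: zprimitive_id.
by rewrite -(eqp_size HT) size_rat_int_poly.
Qed.

Lemma modp_bound (F : fieldType) (Rs T U : {poly int}) (Sj : {poly F}) :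
  Rs = T * U -> redx F Rs != 0 -> redx F T %| Sj -> Sj != 0 ->
  (size (redx F Rs) + size T <= size Sj + size Rs)%N.
Proof.
move=> HR R0 dT S0; move: R0 dT; rewrite HR /redx rmorphM /=.
set tp := map_poly _ T; set up := map_poly _ U => R0 dT.
have tp0 : tp != 0 by move: R0; rewrite mulf_eq0 negb_or => /andP [].
have up0 : up != 0 by move: R0; rewrite mulf_eq0 negb_or => /andP [].
have T0 : T != 0 by apply/eqP => T0; move: tp0; rewrite /tp T0 rmorph0 eqxx.
have U0 : U != 0 by apply/eqP => U0; move: up0; rewrite /up U0 rmorph0 eqxx.
rewrite !size_mul //.
have h1 := dvdp_leq S0 dT.
have h2 : (size up <= size U)%N by apply: size_map_le.
have h3 : (0 < size tp)%N by rewrite size_poly_gt0.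
have h4 : (0 < size up)%N by rewrite size_poly_gt0.
have h5 : (0 < size T)%N by rewrite size_poly_gt0.
have h6 : (0 < size U)%N by rewrite size_poly_gt0.
move: h1 h2 h3 h4 h5 h6.
set a1 := size tp; set a2 := size up; set a3 := size T; set a4 := size U; set a5 := size Sj.
clearbody a1 a2 a3 a4 a5; rewrite -!subn1; lia.
Qed.


Lemma sep_dvd (p q : {poly algC}) : separable_poly p ->
  (forall x, root p x -> root q x) -> p %| q.
Proof.
move=> Hs Hr; have p0 := separable_poly_neq0 Hs.
have [r Dr] := closed_field_poly_normal p.
have lc0 : lead_coef p != 0 by rewrite lead_coef_eq0.
have ur : uniq r.
  by rewrite -separable_prod_XsubC -(eqp_separable (eqp_scale _ lc0)) -Dr.
rewrite Dr dvdpZl //; apply: uniq_roots_dvdp; last by rewrite uniq_rootsE.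
apply/allP => z zr; apply: Hr; rewrite Dr rootZ // root_prod_XsubC //.
Qed.

Lemma count_sum (T : eqType) (a : pred T) (s : seq T) :
  count a s = (\sum_(x <- s) (a x : nat))%N.
Proof. by elim: s => [|x s IH]; rewrite ?big_nil ?big_cons //= IH. Qed.

Lemma ratr_pZtoQ (c : {poly int}) : map_poly ratr (pZtoQ c) = redx algC c.
Proof.
rewrite -map_poly_comp /redx; apply: eq_map_poly => z /=; exact: ratr_int.
Qed.


Lemma arithA (a1 a2 a3 a4 a5 : nat) : (a1 + a5 <= a2 + a3)%N -> (a3 <= a4.+1 + a5 - 1)%N -> (a1 - a2 <= a4)%N.
Proof. lia. Qed.

Theorem lemma4 (f : {poly {poly int}}) (p : nat) (Rs : {poly int})
    (crit : seq algC) (nroots : algC -> seq algC) :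
  (forall g h : {poly {poly int}}, f = (g * g * h)%R ->
     (size g <= 1)%N /\ (size (g`_0)%R <= 1)%N) ->
  (1 <= (size f).-1)%N ->
  (forall a : algC, (size (evalx a f)).-1 = (size f).-1) ->
  prime p ->
  redx 'F_p (lead_coef f) != 0 ->
  redx 'F_p (lead_coef f^`()) != 0 ->
  `|zcontents Rs| = 1 ->
  separable_poly (redx algC Rs) ->
  (forall a : algC, root (redx algC Rs) a = root (redx algC (resultant f f^`())) a) ->
  uniq crit ->
  (forall a : algC, a \in crit <-> xcritical f a) ->
  (forall a : algC, a \in crit -> root_list (evalx a f) (nroots a)) ->
  (\sum_(1 <= i < (size f).-1) ((size f).-1 - i) * dmod p f Rs i
     <= \sum_(a <- crit) size (nroots a))%N.
Proof.
move=> _ Hn Hdeg Hp Hlf Hlfy Hcont Hsep Hroots Huniq Hcrit Hnroots.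
have Hsf : (2 <= size f)%N.
  by move: Hn; case: (size f) => [|[|k]].
set n := (size f).-1.
have f0 : f != 0 by rewrite -size_poly_eq0; move: Hsf; case: (size f).
pose s i := sres f f^`() i.
pose psi := (map_poly (@icast 'F_p) : {rmorphism {poly int} -> {poly 'F_p}}).
pose fp := redxy 'F_p f. pose gp := redxy 'F_p f^`().
pose Rp := redx 'F_p Rs.
pose Sp := Schain Rp (sres fp gp).
have Rs0 : Rs != 0.
  by rewrite -zcontents_eq0 -normr_eq0 Hcont.
have Rp0 : Rp != 0.
  apply/eqP => Hz0.
  have : (p %| zcontents Rs)%Z.
    rewrite dvdz_contents; apply/polyOverP => i.
    have := congr1 (fun q : {poly 'F_p} => q`_i) Hz0.
    rewrite /= /Rp /redx coef_map coef0 /icast => H0.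
    by rewrite (dvdz_pcharf (pchar_Fp Hp)) H0.
  have Ha : absz (zcontents Rs) = 1%N.
    by apply/eqP; rewrite -(@eqr_nat int) natz abszE Hcont.
  rewrite dvdzE Ha /= dvdn1 => /eqP Hp1.
  by move: Hp; rewrite Hp1.
have Hsp : forall i, sres fp gp i = redx 'F_p (s i).
  move=> i.
  have H1 : size (map_poly psi f) = size f by rewrite size_map_poly_id0.
  have H2 : size (map_poly psi f^`()) = size f^`() by rewrite size_map_poly_id0.
  exact: (@gsres_map _ _ psi f f^`() i H1 H2).
have Hd : forall i, (1 <= i)%N -> dmod p f Rs i = (size (Sp i.-1) - size (Sp i))%N.
  by move=> i Hi; rewrite /dmod size_Rchain.
have Hz : forall k, (size (Sp k.+1) <= size (Sp k))%N.
  by move=> k; apply: size_Schain_le.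
pose phi (x : algC) := (horner_eval x \o map_poly (@icast algC) : {rmorphism {poly int} -> algC}).
have Hphi : forall x c, phi x c = (redx algC c).[x] by [].
have Hev : forall x, evalx x f = map_poly (phi x) f.
  by move=> x; apply: eq_map_poly => c; rewrite /= horner_evalE.
have Hevg : forall x g, evalx x g = map_poly (phi x) g.
  by move=> x g; apply: eq_map_poly => c; rewrite /= horner_evalE.
have Hsz1 : forall x, size (evalx x f) = size f.
  move=> x; have := Hdeg x; move: Hsf.
  set a1 := size (evalx x f); set a2 := size f; clearbody a1 a2; rewrite -!subn1; lia.
have Hevd : forall x, map_poly (phi x) f^`() = (evalx x f)^`().
  by move=> x; rewrite Hev deriv_map.
have Hsz2 : forall x, size (map_poly (phi x) f^`()) = size f^`().
  move=> x.
  have e1 : size (map_poly (phi x) f^`()) = (size f).-1 by rewrite Hevd size_deriv0 Hsz1.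
  have e2 := @size_map_le _ _ (phi x) f^`().
  have e3 := lt_size_deriv f0.
  move: e1 e2 e3; set a1 := size (map_poly _ _); set a2 := size f; set a3 := size f^`().
  clearbody a1 a2 a3; rewrite -!subn1; lia.
pose sC i (x : algC) := (redx algC (s i)).[x].
pose B j := [seq x <- crit | has (fun i => sC i x != 0) (iota 1 j)].
have HrootC : forall x, root (redx algC Rs) x -> x \in crit.
  move=> x Hx; apply/Hcrit.
  have Hr : (redx algC (resultant f f^`())).[x] = 0 by move: Hx; rewrite Hroots => /eqP.
  have Ha : size (map_poly (phi x) f) = size f by rewrite -Hev Hsz1.
  rewrite -Hphi -(@resultant_map _ _ (phi x) f f^`() Ha (Hsz2 x)) -Hev Hevd in Hr.
  move/eqP: Hr; rewrite resultant_eq0 => Hg.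
  have [b Hb] : exists b, root (gcdp (evalx x f) (evalx x f)^`()) b.
    by apply/closed_rootP; rewrite neq_ltn Hg orbT.
  exists b; split; first exact/eqP/(root_dvdp (dvdp_gcdl _ _) Hb).
  by rewrite Hevg Hevd; apply/eqP/(root_dvdp (dvdp_gcdr _ _) Hb).
have KeyA : forall j, (size (Sp 0) - size (Sp j) <= size (B j))%N.
  move=> j.
  pose SQ := Schain (pZtoQ Rs) (fun i => pZtoQ (s i)) j.
  have RsQ0 : pZtoQ Rs != 0 by rewrite -size_poly_eq0 size_rat_int_poly size_poly_eq0.
  have SQ0 : SQ != 0 by apply: Schain_neq0.
  have [T [HTp HTeq HTsz]] := @rat_to_int SQ SQ0.
  have [U HU] : exists U, Rs = T * U.
    apply: int_dvd_of_rat HTp _; rewrite (eqp_dvdl _ HTeq).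
    by have := Schain_dvd _ (pZtoQ Rs) (fun i => pZtoQ (s i)) 0 j.
  have HV : forall i, (1 <= i <= j)%N -> exists V, s i = T * V.
    move=> i Hi; apply: int_dvd_of_rat HTp _; rewrite (eqp_dvdl _ HTeq).
    exact: (@Schain_dvd_sr _ (pZtoQ Rs) (fun k => pZtoQ (s k)) i j Hi).
  have HTp_dvd : redx 'F_p T %| Sp j.
    apply: Schain_dvdP.
      by rewrite /Rp HU /redx rmorphM dvdp_mulIl.
    by move=> i Hi; rewrite Hsp; have [V ->] := HV i Hi; rewrite /redx rmorphM dvdp_mulIl.
  have Hmod := @modp_bound _ _ _ _ _ HU Rp0 HTp_dvd (Schain_neq0 _ _ _ j Rp0).
  pose W := \prod_(x <- B j) ('X - x%:P).
  have Hdv : redx algC Rs %| W * map_poly ratr SQ.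
    apply: Schain_map_dvd.
      by rewrite ratr_pZtoQ dvdp_mull.
    move=> i Hi; rewrite ratr_pZtoQ; apply: sep_dvd => // x Hx.
    rewrite rootM; have xc := HrootC x Hx.
    case xB: (x \in B j).
      by rewrite /W root_prod_XsubC xB.
    apply/orP; right.
    move: xB; rewrite /B mem_filter xc andbT => /negbT /hasPn H.
    have := H i; rewrite mem_iota add1n ltnS.
    by move=> Hh; move: (Hh Hi); rewrite negbK.
  have sW : size W = (size (B j)).+1 by rewrite size_prod_XsubC.
  have mSQ0 : (map_poly ratr SQ : {poly algC}) != 0 by rewrite -size_poly_eq0 size_map_poly size_poly_eq0.
  have W0 : W != 0 by rewrite -size_poly_eq0 sW.
  have RC0 : redx algC Rs != 0 := separable_poly_neq0 Hsep.
  have Hle := dvdp_leq (mulf_neq0 W0 mSQ0) Hdv.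
  rewrite size_mul // sW size_map_poly in Hle.
  have sRC : size (redx algC Rs) = size Rs.
    by rewrite /redx size_map_inj_poly //; exact: intr_inj.
  move: Hmod Hle; rewrite sRC -HTsz.
  have e0 : size (Sp 0) = size (redx 'F_p Rs) := erefl.
  rewrite e0 -subn1.
  exact: arithA.
have KeyB : forall x, x \in crit ->
   (\sum_(1 <= j < n) (has (fun i => sC i x != 0%R) (iota 1 j) : nat) <= size (nroots x))%N.
  move=> x xc.
  have [Hu Hm] := Hnroots x xc.
  have Hvan : forall i, (i + size (nroots x) < n)%N -> sC i x = 0.
    move=> i Hi.
    have Ha : size (map_poly (phi x) f) = size f by rewrite -Hev Hsz1.
    rewrite /sC -Hphi /s sres_gsres -(@gsres_map _ _ (phi x) f f^`() i Ha (Hsz2 x)).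
    rewrite -Hev Hevd; apply: (@sres_vanish _ (nroots x)); rewrite ?Hsz1 //.
  apply: (@leq_trans (n - (n - size (nroots x)))); last by lia.
  apply: count_bound => j /hasP [i Hi Hnz].
  rewrite mem_iota in Hi.
  case: (ltnP (i + size (nroots x)) n) => H; first by rewrite Hvan ?eqxx in Hnz.
  lia.
have E1 : (\sum_(1 <= i < n) (n - i) * dmod p f Rs i =
          \sum_(1 <= i < n) (n - i) * (size (Sp i.-1) - size (Sp i)))%N.
  by apply: eq_big_nat => i /andP [H1 _]; rewrite Hd.
rewrite E1 (telescope_sum (fun k => size (Sp k))) //.
apply: (@leq_trans (\sum_(1 <= j < n) size (B j))); first by apply: leq_sum => j _; apply: KeyA.
have E2 : (\sum_(1 <= j < n) size (B j) =
   \sum_(x <- crit) \sum_(1 <= j < n) (has (fun i => sC i x != 0%R) (iota 1 j) : nat))%N.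
  rewrite exchange_big /=; apply: eq_bigr => j _; by rewrite size_filter count_sum.
rewrite E2 big_seq_cond [X in (_ <= X)%N]big_seq_cond; apply: leq_sum => x /andP [xc _].
exact: KeyB x xc.
Qed.
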